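(* Let $n,l$ be integers with $1\le l\le n-1$ and set $b=l/n$. Let $S_{\mathrm{Indep}}\sim\mathrm{Bin}(n,b)$, and let $S_{\mathrm{Fixed},1}$ be the number of elements of $\{1,\dots,n\}$ contained in a uniformly random $2l$-element subset of $\{1,\dots,2n\}$, i.e. $\Pr(S_{\mathrm{Fixed},1}=k)=\binom{2l}{k}\binom{2n-2l}{n-k}/\binom{2n}{n}$. Then for every integer $k$ with $0\le k\le n$, \[ \frac{\Pr(S_{\mathrm{Fixed},1}=k)}{\Pr(S_{\mathrm{Indep}}=k)}\le 2. \]
   Context: Binomial coefficients $\binom{a}{k}$ are $0$ when $k<0$ or $k>a$. *)

(* Defs.v *)
From mathcomp Require Import all_boot all_order all_algebra.
Set Implicit Arguments. Unset Strict Implicit. Unset Printing Implicit Defensive.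
Import Order.TTheory GRing.Theory Num.Theory.
Local Open Scope ring_scope.

Definition binom_pmf (n : nat) (b : rat) (k : nat) : rat :=
  ('C(n, k))%:R * b ^+ k * (1 - b) ^+ (n - k).

(* Pr(S_Fixed,1 = k): hypergeometric, number of elements of {1..n} in a uniform
   random 2l-subset of {1..2n}.  'C(a,k) = 0 for k > a as in the paper. *)
Definition fixed_pmf (n l k : nat) : rat :=
  ('C(2 * l, k) * 'C(2 * n - 2 * l, n - k))%:R / ('C(2 * n, n))%:R.

(* Main.v *)
Require Import Defs.
From mathcomp Require Import all_boot all_order all_algebra.
Import Order.TTheory GRing.Theory Num.Theory.
Local Open Scope ring_scope.
From mathcomp Require Import ring lra zify.

Definition P3 (N : nat) (t : rat) : rat :=
  1 + N%:R * t + N%:R * (N%:R - 1) / 2 * t ^+ 2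
    + N%:R * (N%:R - 1) * (N%:R - 2) / 6 * t ^+ 3.

Lemma nat3_ge0 N : 0 <= (N%:R : rat) * (N%:R - 1) * (N%:R - 2).
Proof.
case: N => [|[|k]]; first by rewrite mulr0n !mul0r.
  by rewrite mulr1n subrr mulr0 mul0r.
rewrite -addn2 natrD.
have hk : 0 <= (k%:R : rat) by [].
have -> : (k%:R + 2%:R - 1 : rat) = k%:R + 1 by rewrite -addrA; congr (_ + _); ring.
have -> : (k%:R + 2%:R - 2%:R : rat) = k%:R by ring.
apply: mulr_ge0; [apply: mulr_ge0|] => //; lra.
Qed.

Lemma L1 (N : nat) (t : rat) : 0 <= t -> P3 N t <= (1 + t) ^+ N.
Proof.
move=> t0; elim: N => [|N IH].
  rewrite /P3 expr0 mulr0n !mul0r !addr0. lra.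
rewrite exprS.
have h := nat3_ge0 N.
have e : (1 + t) * P3 N t = P3 N.+1 t + N%:R * (N%:R - 1) * (N%:R - 2) / 6 * t ^+ 4.
  rewrite /P3 -addn1 natrD. by field.
have : P3 N.+1 t <= (1 + t) * P3 N t.
  rewrite e lerDl; apply: mulr_ge0; [apply: mulr_ge0 => //; lra| exact: exprn_ge0].
move=> h2; apply: (le_trans h2); apply: ler_wpM2l; lra.
Qed.

Definition aa (x : nat) : rat := ((x.+1)%:R / x%:R) ^+ (2 * x + 1).

Lemma L2 x : (1 <= x)%N -> aa x.+1 <= aa x.
Proof.
move=> x1.
have X1 : (1 : rat) <= x%:R by rewrite ler1n.
set X : rat := x%:R in X1 *.
set N := (2 * x + 1)%N.
have NX : (N%:R : rat) = 2 * X + 1 by rewrite /N natrD natrM.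
have X0 : X != 0 by apply/negP => /eqP e; rewrite e in X1; lra.
have X10 : X + 1 != 0 by apply/negP => /eqP e; lra.
have X20 : X + 2 != 0 by apply/negP => /eqP e; lra.
set q := (X + 2) / (X + 1).
set t := 1 / (X * (X + 2)).
have t0 : 0 <= t.
  rewrite /t; apply: divr_ge0 => //; apply: mulr_ge0; lra.
have q0 : 0 <= q by rewrite /q; apply: divr_ge0; lra.
have e1 : aa x.+1 = q ^+ N * q ^+ 2.
  rewrite /aa -exprD /q; congr (_ ^+ _); last by rewrite /N; lia.
  rewrite -addn2 -addn1 !natrD -/X; congr (_ / _); ring.
have e2 : aa x = q ^+ N * (1 + t) ^+ N.
  rewrite /aa -exprMn -/N; congr (_ ^+ _).
  rewrite -addn1 natrD -/X /q /t; field.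
  by rewrite X0 X10 X20.
rewrite e1 e2; apply: ler_wpM2l; first exact: exprn_ge0.
suff h : q ^+ 2 <= P3 N t by exact: le_trans h (L1 N t t0).
rewrite -subr_ge0.
have -> : P3 N t - q ^+ 2 =
   (2 * X ^+ 5 + 10 * X ^+ 4 + 36 * X ^+ 3 + 32 * X ^+ 2 - 2 * X) /
   (6 * (X * (X + 2)) ^+ 3 * (X + 1) ^+ 2).
  rewrite /P3 NX /q /t; field.
  by rewrite X0 X10 X20.
apply: divr_ge0.
  nra.
apply: mulr_ge0; [apply: mulr_ge0|]; [lra| |]; apply: exprn_ge0; nra.
Qed.

Lemma aa_gt0 x : (1 <= x)%N -> 0 < aa x.
Proof. move=> x1; rewrite /aa; apply: exprn_gt0; apply: divr_gt0; rewrite ltr0n //. Qed.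

Lemma aa_mono x y : (1 <= x)%N -> (x <= y)%N -> aa y <= aa x.
Proof.
move=> x1; elim: y => [|y IH]; first by rewrite leqn0 => /eqP e; rewrite e in x1.
rewrite leq_eqVlt => /orP [/eqP <- //| ].
rewrite ltnS => xy; apply: le_trans (IH xy); apply: L2; exact: leq_trans xy.
Qed.

Lemma aa1 : aa 1 = 8.
Proof. by rewrite /aa /= !mulr1n; lra. Qed.

Definition F (l m : nat) : rat :=
  ('C(l + m, l))%:R ^+ 2 * l%:R ^+ (2 * l + 1) * m%:R ^+ (2 * m + 1).

Lemma F_ge0 l m : 0 <= F l m.
Proof. by rewrite /F !mulr_ge0 // exprn_ge0. Qed.

Lemma F_sym l m : F l m = F m l.
Proof.
have e : 'C(l + m, m) = 'C(l + m, l) by rewrite -(bin_sub (leq_addr m l)) addKn.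
by rewrite /F [(m + l)%N]addnC e [RHS]mulrAC.
Qed.

Lemma F_step l m : (1 <= l)%N -> (1 <= m)%N ->
  F l.+1 m * aa m = F l m.+1 * aa l.
Proof.
move=> l1 m1.
have hc := mul_bin_left (l + m.+1) l.
have e1 : (l.+1 + m = l + m.+1)%N by lia.
have e2 : (l + m.+1 - l = m.+1)%N by lia.
rewrite e2 in hc.
rewrite /F /aa e1.
set c' := 'C(l + m.+1, l.+1) in hc *.
set c := 'C(l + m.+1, l) in hc *.
have hcR : (l%:R + 1) * (c'%:R : rat) = (m%:R + 1) * c%:R.
  by rewrite !natr1 -!natrM hc.
have -> : (2 * l.+1 + 1 = (2 * l + 1) + 2)%N by lia.
have -> : (2 * m.+1 + 1 = (2 * m + 1) + 2)%N by lia.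
rewrite -!natr1.
set L : rat := l%:R in hcR *. set M : rat := m%:R in hcR *.
have L0 : L != 0 by rewrite /L pnatr_eq0 -lt0n.
have M0 : M != 0 by rewrite /M pnatr_eq0 -lt0n.
have L10 : L + 1 != 0 by rewrite /L natr1 pnatr_eq0.
have M10 : M + 1 != 0 by rewrite /M natr1 pnatr_eq0.
rewrite !expr_div_n !exprD.
set A := (L + 1) ^+ (2 * l + 1). set B := (M + 1) ^+ (2 * m + 1).
set PL := L ^+ (2 * l + 1). set PM := M ^+ (2 * m + 1).
have PL0 : PL != 0 by rewrite expf_neq0.
have PM0 : PM != 0 by rewrite expf_neq0.
have hc1 : (c'%:R : rat) = (M + 1) * c%:R / (L + 1).
  rewrite -hcR; field; exact: L10.
rewrite hc1; field.
by rewrite -/L -/M L0 M0 L10 !expf_neq0.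
Qed.

Lemma F_ind l m : (1 <= l)%N -> (l <= m)%N -> F 1 (l + m - 1) <= F l m.
Proof.
elim: l m => [//|l IH] m _ lm.
case: (posnP l) => [-> | l1]; first by rewrite add1n subn1.
have h1 := IH m.+1 l1 (leq_trans (leqnSn l) (leq_trans lm (leqnSn m))).
have -> : (l.+1 + m - 1 = l + m.+1 - 1)%N by lia.
apply: le_trans h1 _.
have m1 : (1 <= m)%N by lia.
have am := aa_gt0 m m1.
rewrite -(ler_pM2r am) F_step //.
apply: ler_wpM2l; first exact: F_ge0.
apply: aa_mono => //; lia.
Qed.

Lemma K_rat l m : (1 <= l)%N -> (1 <= m)%N ->
  ((l + m)%:R : rat) ^+ (2 * (l + m) + 1) <= 8 * F l m.
Proof.
wlog lm : l m / (l <= m)%N.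
  move=> H l1 m1; case: (leqP l m) => h; first exact: H.
  rewrite addnC F_sym; apply: H => //; exact: ltnW.
move=> l1 m1.
have := F_ind l m l1 lm; set x := (l + m - 1)%N => hF.
have ex : (l + m = x.+1)%N by rewrite /x; lia.
have x1 : (1 <= x)%N by rewrite /x; lia.
rewrite ex.
apply: le_trans (ler_wpM2l _ hF); last by [].
have ha := aa_mono 1 x (leqnn 1) x1; rewrite aa1 /aa in ha.
rewrite /F bin1 add1n mulr1n expr1n mulr1.
have -> : (2 * x.+1 + 1 = (2 * x + 1) + 2)%N by lia.
rewrite exprD.
have X0 : (0 : rat) < x%:R by rewrite ltr0n.
rewrite expr_div_n ler_pdivrMr in ha; last exact: exprn_gt0.
rewrite mulrC mulrCA.
apply: ler_wpM2l; first exact: exprn_ge0.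
exact: ha.
Qed.

Lemma cbS l : (l.+1 * 'C(2 * l.+1, l.+1) = 2 * (2 * l + 1) * 'C(2 * l, l))%N.
Proof.
have h1 := mul_bin_left (2 * l.+1) l.
have h2 := mul_bin_down (2 * l.+1) l.
have h3 := mul_bin_down (2 * l + 1) l.
have e1 : (2 * l.+1).-1 = (2 * l + 1)%N by lia.
have e2 : (2 * l + 1).-1 = (2 * l)%N by lia.
rewrite e1 in h2; rewrite e2 in h3.
have e3 : (2 * l.+1 - l = l.+2)%N by lia.
have e4 : (2 * l + 1 - l = l.+1)%N by lia.
rewrite e3 in h1 h2; rewrite e4 in h3.
move: h1 h2 h3.
set A := 'C(2 * l.+1, l.+1). set B := 'C(2 * l.+1, l).
set C := 'C(2 * l + 1, l). set D := 'C(2 * l, l).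
move=> h1 h2 h3.
(* (l+1) A = (l+2) B = (2l+2) C ; (2l+1) D = (l+1) C *)
have : (l.+1 * (l.+1 * A) = l.+1 * (2 * (2 * l + 1) * D))%N.
  rewrite h1 -h2.
  nia.
by move/eqP; rewrite eqn_pmul2l // => /eqP.
Qed.

Lemma B1 l : ('C(2 * l, l) ^ 2 * (3 * l + 1) <= 16 ^ l)%N.
Proof.
elim: l => [|l IH]; first by rewrite muln0 bin0.
have h := cbS l.
move: IH h; set C := 'C(2 * l, l); set C' := 'C(2 * l.+1, l.+1); set P := (16 ^ l)%N.
move=> IH h.
have k0 : (0 < l.+1 ^ 2 * (3 * l + 1))%N by rewrite muln_gt0 expn_gt0 addn1.
rewrite -(leq_pmul2r k0).
have e : (C' ^ 2 * (3 * l.+1 + 1) * (l.+1 ^ 2 * (3 * l + 1))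
   = 4 * (2 * l + 1) ^ 2 * (3 * l + 4) * (C ^ 2 * (3 * l + 1)))%N.
  have -> : (C' ^ 2 * (3 * l.+1 + 1) * (l.+1 ^ 2 * (3 * l + 1))
     = (l.+1 * C') ^ 2 * (3 * l.+1 + 1) * (3 * l + 1))%N by ring.
  rewrite h; ring.
rewrite e.
apply: (@leq_trans (4 * (2 * l + 1) ^ 2 * (3 * l + 4) * P)).
  by rewrite leq_mul2l IH orbT.
have h3 : (4 * (2 * l + 1) ^ 2 * (3 * l + 4) <= 16 * (l.+1 ^ 2 * (3 * l + 1)))%N by nia.
have -> : (16 ^ l.+1 * (l.+1 ^ 2 * (3 * l + 1)) = 16 * (l.+1 ^ 2 * (3 * l + 1)) * P)%N by rewrite /P expnS; ring.
by rewrite leq_mul2r h3 orbT.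
Qed.

Lemma B2 n : (1 <= n)%N -> (16 ^ n <= 4 * n * 'C(2 * n, n) ^ 2)%N.
Proof.
elim: n => [//|n IH] _.
case: (posnP n) => [-> //|n0].
have {}IH := IH n0.
have h := cbS n.
move: IH h; set C := 'C(2 * n, n); set C' := 'C(2 * n.+1, n.+1); set P := (16 ^ n)%N.
move=> IH h.
have k0 : (0 < n * n.+1)%N by rewrite muln_gt0 n0.
rewrite -(leq_pmul2r k0).
have e : (4 * n.+1 * C' ^ 2 * (n * n.+1) = 4 * (2 * n + 1) ^ 2 * (4 * n * C ^ 2))%N.
  have -> : (4 * n.+1 * C' ^ 2 * (n * n.+1) = 4 * n * (n.+1 * C') ^ 2)%N by ring.
  rewrite h; ring.
rewrite e.
apply: (@leq_trans (4 * (2 * n + 1) ^ 2 * P)); last by rewrite leq_mul2l IH orbT.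
have h3 : (16 * (n * n.+1) <= 4 * (2 * n + 1) ^ 2)%N by nia.
have -> : (16 ^ n.+1 * (n * n.+1) = 16 * (n * n.+1) * P)%N by rewrite /P expnS; ring.
by rewrite leq_mul2r h3 orbT.
Qed.

Lemma K_nat l m : (1 <= l)%N -> (1 <= m)%N ->
  ((l + m) ^ (2 * (l + m) + 1) <= 8 * ('C(l + m, l) ^ 2 * l ^ (2 * l + 1) * m ^ (2 * m + 1)))%N.
Proof.
move=> l1 m1; have := K_rat l m l1 m1.
by rewrite /F -!natrX -!natrM ler_nat.
Qed.

Lemma h4l l m : (8 * (l * m) <= (3 * l + 1) * (3 * m + 1))%N.
Proof. nia. Qed.

Lemma central l m : (1 <= l)%N -> (1 <= m)%N ->
  ('C(2 * l, l) * 'C(2 * m, m) * (l + m) ^ (l + m) <=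
   2 * 'C(2 * (l + m), l + m) * ('C(l + m, l) * l ^ l * m ^ m))%N.
Proof.
move=> l1 m1.
have hK := K_nat l m l1 m1.
have h1 := B1 l. have h2 := B1 m.
have h3 := B2 (l + m) (leq_trans l1 (leq_addr m l)).
move: hK h1 h2 h3.
set n := (l + m)%N.
set a := 'C(2 * l, l). set b := 'C(2 * m, m). set c := 'C(2 * n, n).
set y := ('C(n, l) * l ^ l * m ^ m)%N.
have eY : ('C(n, l) ^ 2 * l ^ (2 * l + 1) * m ^ (2 * m + 1) = l * m * y ^ 2)%N.
  have E x : (x ^ (2 * x + 1) = x * (x ^ x) ^ 2)%N.
    by rewrite expnD expn1 [(2 * x)%N]mulnC expnM mulnC.
  by rewrite /y !E; ring.
rewrite eY => hK h1 h2 h3.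
rewrite -(@leq_exp2r _ _ 2) //.
have n0 : (0 < n)%N by rewrite /n; lia.
have k0 : (0 < n * (3 * l + 1) * (3 * m + 1))%N by rewrite !muln_gt0 n0 !addn1.
rewrite -(leq_pmul2r k0).
have e1 : ((a * b * n ^ n) ^ 2 * (n * (3 * l + 1) * (3 * m + 1))
   = (a ^ 2 * (3 * l + 1)) * (b ^ 2 * (3 * m + 1)) * n ^ (2 * n + 1))%N.
  have -> : (n ^ (2 * n + 1) = n * (n ^ n) ^ 2)%N.
    by rewrite expnD expn1 [(2 * n)%N]mulnC expnM mulnC.
  ring.
rewrite e1.
apply: (@leq_trans (16 ^ l * 16 ^ m * (8 * (l * m * y ^ 2)))).
  by apply: leq_mul => //; apply: leq_mul.
rewrite -expnD -/n.
apply: (@leq_trans (4 * n * c ^ 2 * (8 * (l * m * y ^ 2)))).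
  by apply: leq_mul.
have h4 := h4l l m.
have -> : (4 * n * c ^ 2 * (8 * (l * m * y ^ 2)) = (4 * n * c ^ 2 * y ^ 2) * (8 * (l * m)))%N by ring.
have -> : ((2 * c * y) ^ 2 * (n * (3 * l + 1) * (3 * m + 1)) = (4 * n * c ^ 2 * y ^ 2) * ((3 * l + 1) * (3 * m + 1)))%N by ring.
by apply: leq_mul.
Qed.

Lemma abstr_up (K a a' b b' c c' l m u v N : nat) : (0 < K)%N ->
  (K * c' = N * c)%N -> (K * a' = v * a)%N -> (N * b = u * b')%N ->
  (l * u <= v * m)%N -> (a * b * c' * l <= a' * b' * c * m)%N.
Proof.
move=> K0 I1 I2 I3 h; rewrite -(leq_pmul2l K0).
have -> : (K * (a * b * c' * l) = (K * c') * (a * b * l))%N by ring.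
rewrite I1.
have -> : (N * c * (a * b * l) = (N * b) * (a * c * l))%N by ring.
rewrite I3.
have -> : (K * (a' * b' * c * m) = (K * a') * (b' * c * m))%N by ring.
rewrite I2.
have -> : (u * b' * (a * c * l) = (a * c * b') * (l * u))%N by ring.
have -> : (v * a * (b' * c * m) = (a * c * b') * (v * m))%N by ring.
by rewrite leq_mul2l h orbT.
Qed.

Lemma abstr_down (K a a' b b' c c' l m u v N : nat) : (0 < K)%N ->
  (K * c' = N * c)%N -> (K * a' = v * a)%N -> (N * b = u * b')%N ->
  (v * m <= l * u)%N -> (a' * b' * c * m <= a * b * c' * l)%N.
Proof.
move=> K0 I1 I2 I3 h; rewrite -(leq_pmul2l K0).
have -> : (K * (a * b * c' * l) = (K * c') * (a * b * l))%N by ring.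
rewrite I1.
have -> : (N * c * (a * b * l) = (N * b) * (a * c * l))%N by ring.
rewrite I3.
have -> : (K * (a' * b' * c * m) = (K * a') * (b' * c * m))%N by ring.
rewrite I2.
have -> : (u * b' * (a * c * l) = (a * c * b') * (l * u))%N by ring.
have -> : (v * a * (b' * c * m) = (a * c * b') * (v * m))%N by ring.
by rewrite leq_mul2l h orbT.
Qed.

Lemma num_up l m k : (k < l)%N -> (l * (2 * m - (l + m - k.+1)) <= (2 * l - k) * m)%N.
Proof. move=> h; nia. Qed.

Lemma num_down l m k : (l <= k)%N -> (k < l + m)%N ->
  ((2 * l - k) * m <= l * (2 * m - (l + m - k.+1)))%N.
Proof. move=> h1 h2; nia. Qed.

Arguments abstr_up {K a a' b b' c c' l m u v N}.
Arguments abstr_down {K a a' b b' c c' l m u v N}.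

Definition Xk (n l k : nat) := ('C(2 * l, k) * 'C(2 * (n - l), n - k))%N.
Definition Yk (n l k : nat) := ('C(n, k) * l ^ k * (n - l) ^ (n - k))%N.

Lemma step_gen n l k : (l < n)%N -> (k < n)%N ->
  [/\ (k < l)%N -> (Xk n l k * Yk n l k.+1 <= Xk n l k.+1 * Yk n l k)%N
    & (l <= k)%N -> (Xk n l k.+1 * Yk n l k <= Xk n l k * Yk n l k.+1)%N].
Proof.
move=> ln kn.
set m := (n - l)%N.
set j := (n - k.+1)%N.
have ej : (n - k = j.+1)%N by rewrite /j; lia.
have I1 := mul_bin_left n k.
have I2 := mul_bin_left (2 * l) k.
have I3 := mul_bin_left (2 * m) j.
rewrite ej in I1.
have eY1 : (Yk n l k.+1 = 'C(n, k.+1) * l * (l ^ k * m ^ j))%N.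
  by rewrite /Yk -/m -/j expnS; ring.
have eY0 : (Yk n l k = 'C(n, k) * m * (l ^ k * m ^ j))%N.
  by rewrite /Yk -/m ej expnS; ring.
have eX1 : (Xk n l k.+1 = 'C(2 * l, k.+1) * 'C(2 * m, j))%N by [].
have eX0 : (Xk n l k = 'C(2 * l, k) * 'C(2 * m, j.+1))%N by rewrite /Xk -/m ej.
rewrite eY1 eY0 eX1 eX0.
split=> [kl | lk].
  have -> : ('C(2 * l, k) * 'C(2 * m, j.+1) * ('C(n, k.+1) * l * (l ^ k * m ^ j))
     = ('C(2 * l, k) * 'C(2 * m, j.+1) * 'C(n, k.+1) * l) * (l ^ k * m ^ j))%N by ring.
  have -> : ('C(2 * l, k.+1) * 'C(2 * m, j) * ('C(n, k) * m * (l ^ k * m ^ j))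
     = ('C(2 * l, k.+1) * 'C(2 * m, j) * 'C(n, k) * m) * (l ^ k * m ^ j))%N by ring.
  apply: leq_mul => //.
  apply: (abstr_up (ltn0Sn k) I1 I2 I3).
  have hn : (n = l + m)%N by rewrite /m; lia.
  rewrite /j hn; exact: num_up.
have -> : ('C(2 * l, k) * 'C(2 * m, j.+1) * ('C(n, k.+1) * l * (l ^ k * m ^ j))
   = ('C(2 * l, k) * 'C(2 * m, j.+1) * 'C(n, k.+1) * l) * (l ^ k * m ^ j))%N by ring.
have -> : ('C(2 * l, k.+1) * 'C(2 * m, j) * ('C(n, k) * m * (l ^ k * m ^ j))
   = ('C(2 * l, k.+1) * 'C(2 * m, j) * 'C(n, k) * m) * (l ^ k * m ^ j))%N by ring.
apply: leq_mul => //.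
apply: (abstr_down (ltn0Sn k) I1 I2 I3).
have hn : (n = l + m)%N by rewrite /m; lia.
rewrite /j hn; apply: num_down => //; rewrite -hn //.
Qed.

Definition rr n l k : rat := (Xk n l k)%:R / (Yk n l k)%:R.

Lemma Yk_gt0 n l k : (0 < l)%N -> (l < n)%N -> (k <= n)%N -> (0 < Yk n l k)%N.
Proof.
move=> l0 ln kn; rewrite /Yk !muln_gt0 bin_gt0 kn !expn_gt0 l0 /=.
by rewrite subn_gt0 ln.
Qed.

Lemma rr_le n l k k' : (0 < l)%N -> (l < n)%N -> (k <= n)%N -> (k' <= n)%N ->
  (Xk n l k * Yk n l k' <= Xk n l k' * Yk n l k)%N -> rr n l k <= rr n l k'.
Proof.
move=> l0 ln kn kn' h.
have y := Yk_gt0 n l k l0 ln kn. have y' := Yk_gt0 n l k' l0 ln kn'.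
rewrite /rr ler_pdivlMr ?ltr0n // mulrAC ler_pdivrMr ?ltr0n //.
by rewrite -!natrM ler_nat.
Qed.

Lemma rr_up n l : (0 < l)%N -> (l < n)%N -> forall d, (d <= l)%N -> rr n l (l - d) <= rr n l l.
Proof.
move=> l0 ln; elim=> [|d IH] hd; first by rewrite subn0.
apply: le_trans (IH (ltnW hd)).
have e : (l - d = (l - d.+1).+1)%N by lia.
rewrite [in X in _ <= X]e.
apply: rr_le => //; try lia.
have hk : (l - d.+1 < n)%N by lia.
have [h _] := step_gen n l (l - d.+1) ln hk.
apply: h; lia.
Qed.

Lemma rr_down n l : (0 < l)%N -> (l < n)%N -> forall d, (l + d <= n)%N -> rr n l (l + d) <= rr n l l.
Proof.
move=> l0 ln; elim=> [|d IH] hd; first by rewrite addn0.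
have hd' : (l + d <= n)%N by lia.
have h1 : rr n l (l + d.+1) <= rr n l (l + d).
  rewrite addnS.
  apply: rr_le => //; try lia.
  have hk : (l + d < n)%N by lia.
  have [_ h] := step_gen n l (l + d) ln hk.
  apply: h; lia.
exact: le_trans h1 (IH hd').
Qed.

Lemma rr_max n l k : (0 < l)%N -> (l < n)%N -> (k <= n)%N -> rr n l k <= rr n l l.
Proof.
move=> l0 ln kn; case: (leqP k l) => h.
  have := rr_up n l l0 ln (l - k) (leq_subr k l); by rewrite subKn.
have h2 : (l + (k - l) <= n)%N by lia.
have := rr_down n l l0 ln (k - l) h2; by rewrite subnKC // ltnW.
Qed.

Theorem mainTheorem9 (n l k : nat) :
  (1 <= l)%N -> (l <= n - 1)%N -> (k <= n)%N ->
  fixed_pmf n l k / binom_pmf n (l%:R / n%:R) k <= 2.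
Proof.
move=> l1 ln1 kn.
have ln : (l < n)%N by lia.
have n0 : (0 < n)%N by lia.
set m := (n - l)%N.
have m1 : (1 <= m)%N by rewrite /m; lia.
have nlm : (n = l + m)%N by rewrite /m; lia.
have nR : (n%:R : rat) != 0 by rewrite pnatr_eq0 -lt0n.
have eF : fixed_pmf n l k = (Xk n l k)%:R / ('C(2 * n, n))%:R.
  by rewrite /fixed_pmf /Xk -mulnBr.
have eB : binom_pmf n (l%:R / n%:R) k = (Yk n l k)%:R / (n%:R) ^+ n.
  rewrite /binom_pmf /Yk -/m !natrM !natrX.
  have -> : (1 - l%:R / n%:R : rat) = m%:R / n%:R.
    rewrite /m natrB ?(ltnW ln) //; field; exact: nR.
  have -> : (n%:R ^+ n : rat) = n%:R ^+ k * n%:R ^+ (n - k) by rewrite -exprD subnKC.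
  rewrite !expr_div_n; field.
  by rewrite !expf_neq0.
have Y0 := Yk_gt0 n l k l1 ln kn.
have Yl0 := Yk_gt0 n l l l1 ln (ltnW ln).
have C0 : (0 < 'C(2 * n, n))%N by rewrite bin_gt0 leq_pmull.
have N0 : (0 : rat) < n%:R ^+ n by rewrite exprn_gt0 // ltr0n.
rewrite eF eB.
have -> : (Xk n l k)%:R / ('C(2 * n, n))%:R / ((Yk n l k)%:R / n%:R ^+ n)
    = rr n l k * (n%:R ^+ n / ('C(2 * n, n))%:R).
  rewrite /rr; field.
  by rewrite !pnatr_eq0 -!lt0n Y0 C0 expf_neq0.
have hpos : (0 : rat) <= n%:R ^+ n / ('C(2 * n, n))%:R.
  by apply: divr_ge0; [exact: ltW|].
apply: le_trans (ler_wpM2r hpos (rr_max n l k l1 ln kn)) _.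
have hc := central l m l1 m1.
rewrite -nlm in hc.
rewrite /rr mulf_div ler_pdivrMr; last by rewrite -natrM ltr0n muln_gt0 Yl0 C0.
rewrite -natrX -!natrM ler_nat.
have eXl : Xk n l l = ('C(2 * l, l) * 'C(2 * m, m))%N by rewrite /Xk -/m.
have eYl : Yk n l l = ('C(n, l) * l ^ l * m ^ m)%N by rewrite /Yk -/m.
rewrite eXl eYl.
apply: leq_trans hc _.
by rewrite -mulnA [X in (2 * X <= _)%N]mulnC.
Qed.
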